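(* Let $F$ be the fractal percolation in $[0,1]^2$ with parameters $M\in\mathbb{N}_{\geq2}$ and $p>1/M^2$, $p\leq 1$, $D=\log(M^2p)/\log M$, $r=1/M$. Let $x$ be a point which is a common corner of four level-1 squares $J_1,J_2,J_3,J_4$ (so $x$ lies in the interior of $[0,1]^2$), numbered so that $J_1$ and $J_2$ intersect only in $x$. Define $$E_2:=2(M-1)^2\sum_{n=1}^\infty r^{nD}\mathbb{E}V_0(C_n^1\cap C_n^2),\quad E_3:=4(M-1)^2\sum_{n=1}^\infty r^{nD}\mathbb{E}V_0(C_n^1\cap C_n^2\cap C_n^3),$$ $$E_4:=(M-1)^2\sum_{n=1}^\infty r^{nD}\mathbb{E}V_0\Big(\bigcap_{j=1}^4C_n^j\Big).$$ Then $$E_2=2(M-1)^2\left(\frac{1}{M^2p-1}-\frac{2}{M^2-1}+\frac{p}{M^2-p}\right),$$ $$E_3=4(M-1)^2\left(\frac{1}{M^2p-1}-\frac{3}{M^2-1}+\frac{3p}{M^2-p}-\frac{p^2}{M^2-p^2}\right),$$ $$E_4=(M-1)^2\left(\frac{1}{M^2p-1}-\frac{4}{M^2-1}+\frac{6p}{M^2-p}-\frac{4p^2}{M^2-p^2}+\frac{p^3}{M^2-p^3}\right).$$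
   Context: Fractal percolation in $[0,1]^2$: $F_0=[0,1]^2$; given $F_{n-1}$, a union of closed grid squares of side $M^{-(n-1)}$, each is divided into $M^2$ closed subsquares of side $M^{-n}$, each kept independently (of everything else) with probability $p$; $F_n$ is the union of kept subsquares. The level-1 squares are the $M^2$ closed subsquares of $[0,1]^2$ of side $1/M$. For a level-1 square $J_j$, $C_n^j$ is the union of those level-$n$ grid squares (side $M^{-n}$) contained in $J_j$ that do not belong to $F_n$. $V_0$ is the Euler characteristic. *)

(* Defs.v *)
From HB Require Import structures.
From mathcomp Require Import all_boot all_order all_algebra.
From mathcomp Require Import all_classical all_reals all_analysis.
From Stdlib Require Import ClassicalEpsilon.
Set Implicit Arguments. Unset Strict Implicit. Unset Printing Implicit Defensive.
Import Order.TTheory GRing.Theory Num.Theory.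
Import numFieldNormedType.Exports.
Local Open Scope classical_set_scope.
Local Open Scope ring_scope.

Section FractalPercolation.
Variable R : realType.
Variable M : nat.

Definition grid_square (n i j : nat) : set (R * R) :=
  [set z | (i%:R / (M ^ n)%:R <= z.1 <= i.+1%:R / (M ^ n)%:R) /\
           (j%:R / (M ^ n)%:R <= z.2 <= j.+1%:R / (M ^ n)%:R)].

Definition is_corner1 (x : R * R) (a b : nat) : Prop :=
  exists (da db : bool), x = ((a + da)%:R / M%:R, (b + db)%:R / M%:R).

(* Index set of all the coins used up to level n: for each level k+1
   (k < n) and each level-(k+1) grid square (a, b). *)
Definition coin_index (n : nat) : finType :=
  {k : 'I_n & ('I_(M ^ k.+1) * 'I_(M ^ k.+1))%type}.

Definition config (n : nat) : finType := {ffun coin_index n -> bool}.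

Definition config_prob (p : R) (n : nat) (w : config n) : R :=
  \prod_(s : coin_index n) (if w s then p else 1 - p).

(* The level-n square (i, j) is kept, i.e. belongs to F_n: every one of its
   ancestors at levels 1..n (including itself) has been kept. *)
Definition kept (n : nat) (w : config n) (i j : nat) : Prop :=
  forall s : coin_index n,
    ((tagged s).1 : nat) = (i %/ M ^ (n - (tag s).+1))%N ->
    ((tagged s).2 : nat) = (j %/ M ^ (n - (tag s).+1))%N -> w s.

(* C_n^J : union of the level-n grid squares contained in the level-1
   square J = (a, b) that do not belong to F_n. *)
Definition Cset (n : nat) (w : config n) (J : 'I_M * 'I_M) : set (R * R) :=
  [set z | exists i j : nat, [/\ (i < M ^ n)%N, (j < M ^ n)%N,
       grid_square n i j `<=` grid_square 1 J.1 J.2,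
       ~ kept w i j & grid_square n i j z]].

Definition Exp (p : R) (n : nat) (X : config n -> R) : R :=
  \sum_(w : config n) config_prob p w * X w.

End FractalPercolation.

Section Euler.
Variable R : realType.

Definition convex_set2 (K : set (R * R)) : Prop :=
  forall a b, K a -> K b -> forall t : R, 0 <= t <= 1 ->
    K (t * a.1 + (1 - t) * b.1, t * a.2 + (1 - t) * b.2).

Definition polyconvex_rep (A : set (R * R)) (s : seq (set (R * R))) : Prop :=
  (forall K : set (R * R), K \in s -> compact K /\ convex_set2 K) /\
  A = [set z | exists2 K : set (R * R), K \in s & K z].

Definition euler_ie (s : seq (set (R * R))) : R :=
  \sum_(I : {set 'I_(size s)} | I != finset.set0)
     (-1) ^+ (#|I|.+1) *
     (asbool (exists z, forall i : 'I_(size s), i \in I -> nth set0 s i z))%:R.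

(* Euler characteristic V_0 on the convex ring (additive extension of the
   indicator of nonempty compact convex sets); 0 outside the convex ring. *)
Definition V0 (A : set (R * R)) : R :=
  if asbool (exists s, polyconvex_rep A s)
  then euler_ie (epsilon (inhabits [::]) (polyconvex_rep A))
  else 0.

End Euler.

(* Main.v *)
Set Warnings "-all".
Require Import Defs.
From HB Require Import structures.
From mathcomp Require Import all_boot all_order all_algebra.
From mathcomp Require Import all_classical all_reals all_analysis.
From mathcomp Require Import ring lra.
From Stdlib Require Import ClassicalEpsilon.
Import Order.TTheory GRing.Theory Num.Theory.
Import numFieldNormedType.Exports.
Local Open Scope classical_set_scope.
Local Open Scope ring_scope.
Section Comb.
Variable R : realType.

Lemma prod_bool (I : finType) (A : pred I) (b : I -> bool) :
  \prod_(i in A) ((b i)%:R : R) = ([forall i in A, b i])%:R.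
Proof.
case: forallP => [H|H].
  by rewrite big1 // => i iA; move/implyP: (H i) => /(_ iA) ->.
have /existsP [i /andP [iA nbi]] : [exists i, (i \in A) && ~~ b i].
  apply: contrapT => H2; apply: H => i; apply/implyP => iA; apply: contrapT => nbi.
  by apply: H2; apply/existsP; exists i; rewrite iA; apply/negP.
by rewrite (bigD1 i) //= (negbTE nbi) mul0r.
Qed.
End Comb.
Section Comb2.
Variable R : realType.

Lemma distr_sub (I0 : finType) (T : {set I0}) (I : {set I0}) :
  \prod_(i : I0) (if i \in I then - ((i \in T)%:R : R) else 1) =
  (-1) ^+ #|I| * (I \subset T)%:R.
Proof.
rewrite -big_mkcond prodrN prod_bool; congr (_ * (nat_of_bool _)%:R).
apply/idP/idP => [/forall_inP H|/fintype.subsetP H]; [apply/fintype.subsetP|apply/forall_inP] => i; exact: H.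
Qed.

Lemma alt_sum (I0 : finType) (T : {set I0}) : T != finset.set0 ->
  \sum_(I : {set I0} | I != finset.set0) (-1) ^+ (#|I|.+1) * ((I \subset T))%:R = 1 :> R.
Proof.
case/set0Pn => t tT.
have H0 : \prod_(i : I0) (- ((i \in T)%:R) + 1) = 0 :> R.
  by rewrite (bigD1 t) //= tT addNr mul0r.
rewrite bigA_distr in H0.
rewrite (eq_bigr (fun I : {set I0} => ((-1)^+#|I| * (I \subset T)%:R : R))) in H0; last by move=> I _; exact: distr_sub.
rewrite (bigD1 finset.set0) //= cards0 expr0 mul1r finset.sub0set /= in H0.
under eq_bigr do rewrite exprS mulN1r mulNr.
rewrite sumrN.
by move/eqP: H0; rewrite addrC addr_eq0 => /eqP ->; rewrite opprK.
Qed.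
End Comb2.
Section Euler1.
Variable R : realType.

Lemma euler_pt (x : R * R) (s : seq (set (R * R))) :
  (forall K, K \in s -> K `<=` [set x]) -> (exists2 K, K \in s & K x) ->
  euler_ie s = 1.
Proof.
rewrite /euler_ie => Hs [K Ks Kx].
set T := [set i : 'I_(size s) | `[< nth set0 s i x >]]%SET.
have T0 : T != finset.set0.
  apply/set0Pn; exists (Ordinal (etrans (index_mem K s) Ks)).
  by rewrite inE; apply/asboolP; rewrite /= nth_index.
rewrite -[RHS](@alt_sum R _ _ T0).
apply: eq_bigr => I _; congr (_ * (nat_of_bool _)%:R).
apply/asboolP/idP.
- move=> [z Hz]; apply/fintype.subsetP => i iI; rewrite inE; apply/asboolP.
  have Hz' := Hz i iI.
  have : nth set0 s i `<=` [set x] by apply: Hs; apply: mem_nth.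
  by move=> /(_ z Hz') /= <-.
- move/fintype.subsetP => H; exists x => i iI; move: (H i iI); rewrite inE.
  by move/asboolP.
Qed.

Lemma euler_empty (s : seq (set (R * R))) :
  (forall K, K \in s -> K `<=` set0) -> euler_ie s = 0.
Proof.
move=> Hs; rewrite /euler_ie big1 // => I /set0Pn [i iI].
have -> : `[< exists z, forall j : 'I_(size s), j \in I -> nth set0 s j z >] = false.
  apply/asboolP => -[z Hz].
  have : nth set0 s i `<=` set0 by apply: Hs; apply: mem_nth.
  by move=> /(_ z (Hz i iI)).
by rewrite mulr0.
Qed.

Lemma V0_sub1 (x : R * R) (S : set (R * R)) : S `<=` [set x] ->
  V0 S = (`[< S x >])%:R.
Proof.
move=> HS; rewrite /V0.
case: (asboolP (exists s, polyconvex_rep S s)) => Hex; last first.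
  case: asboolP => // Sx; exfalso; apply: Hex; exists [:: [set x]]; split.
    move=> K; rewrite inE => /eqP ->; split; first exact: compact_set1.
    move=> a b ha hb t _; rewrite /= in ha hb *; rewrite ha hb.
    by case: (x) => x1 x2 /=; congr (_, _); ring.
  apply/seteqP; split => z.
    by move=> Sz; exists [set x]; rewrite ?inE //; have := HS z Sz.
  by move=> [K]; rewrite inE => /eqP -> ->.
have [Hc HA] := epsilon_spec (inhabits [::]) (polyconvex_rep S) Hex.
set s := epsilon _ _ in Hc HA *.
case: asboolP => Sx.
  rewrite (@euler_pt x s) //.
    by move=> K Ks z Kz; apply: HS; rewrite HA; exists K.
  by move: Sx; rewrite HA => -[K Ks Kx]; exists K.
apply: euler_empty => K Ks z Kz; apply: Sx.
have Sz : S z by rewrite HA; exists K.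
by have := HS z Sz => /= <-.
Qed.
End Euler1.
Section Prob.
Variable R : realType.
Variables (S : finType) (p : R).
Definition mu (b : bool) : R := if b then p else 1 - p.

Lemma exp_prod (I : finType) (A : I -> {set S}) (T : {set I}) :
  (forall s i j, s \in A i -> s \in A j -> i = j) ->
  \sum_(w : {ffun S -> bool}) (\prod_s mu (w s)) *
     \prod_(i in T) \prod_(s in A i) ((w s)%:R : R)
  = \prod_(i in T) p ^+ #|A i|.
Proof.
move=> Hdis.
have E1 : forall w : {ffun S -> bool},
  \prod_(i in T) \prod_(s in A i) ((w s)%:R : R) =
  \prod_s \prod_(i in T) (if s \in A i then (w s)%:R else 1).
  move=> w; under eq_bigr do rewrite big_mkcond /=.
  by rewrite exchange_big.
rewrite (eq_bigr (fun w : {ffun S -> bool} => \prod_s (mu (w s) * \prod_(i in T) (if s \in A i then ((w s)%:R : R) else 1)))); last first.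
  by move=> w _; rewrite E1 -big_split.
rewrite -(bigA_distr_bigA (fun s b => mu b * \prod_(i in T) (if s \in A i then (b%:R : R) else 1))) /=.
have E2 : forall s, \sum_(b : bool) mu b * \prod_(i in T) (if s \in A i then (b%:R : R) else 1)
   = \prod_(i in T) (if s \in A i then p else 1).
  move=> s; rewrite big_bool /=.
  case: (pickP [pred i in T | s \in A i]) => [i0 /andP [i0T si0] | none].
    have Hr : forall c : R, \prod_(i in T) (if s \in A i then c else 1) = c.
      move=> c; rewrite (bigD1 i0) //= si0 big1 ?mulr1 // => i /andP [iT ni0].
      case: ifP => // si; exfalso; move/eqP: ni0; apply; exact: Hdis si si0.
    by rewrite !Hr /mu; ring.
  have Hr : forall c : R, \prod_(i in T) (if s \in A i then c else 1) = 1.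
    move=> c; rewrite big1 // => i iT; case: ifP => // si.
    by have := none i; rewrite /= iT si.
  by rewrite !Hr /mu; ring.
under eq_bigr do rewrite E2.
rewrite exchange_big /=; apply: eq_bigr => i _.
by rewrite -big_mkcond /= prodr_const.
Qed.

Lemma exp_main (I : finType) (A : I -> {set S}) (n : nat) :
  (forall s i j, s \in A i -> s \in A j -> i = j) ->
  (forall i, #|A i| = n) ->
  \sum_(w : {ffun S -> bool}) (\prod_s mu (w s)) *
     \prod_(i : I) (1 - \prod_(s in A i) ((w s)%:R : R))
  = (1 - p ^+ n) ^+ #|I|.
Proof.
move=> Hdis Hcard.
have E1 : forall (Y : I -> R), \prod_(i : I) (1 - Y i) =
    \sum_(T : {set I}) (-1) ^+ #|T| * \prod_(i in T) Y i.
  move=> Y; under eq_bigr do rewrite addrC.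
  rewrite bigA_distr; apply: eq_bigr => T _.
  by rewrite -big_mkcond prodrN.
under eq_bigr do rewrite E1 big_distrr /=.
rewrite exchange_big /=.
rewrite (eq_bigr (fun T : {set I} => (-1) ^+ #|T| * \prod_(i in T) p ^+ n)); last first.
  move=> T _; have -> : \prod_(i in T) p ^+ n = \prod_(i in T) p ^+ #|A i| by apply: eq_bigr => i _; rewrite Hcard.
  rewrite -(@exp_prod _ A T Hdis) big_distrr /=; apply: eq_bigr => w _.
  by rewrite mulrCA.
have := E1 (fun _ => p ^+ n); rewrite /= => <-.
by rewrite prodr_const.
Qed.
End Prob.
From mathcomp Require Import zify.
Section Geo.
Variable R : realType.
Variable M : nat.
Hypothesis hM : (0 < M)%N.

Lemma L_le_div (u v K : nat) : (0 < K)%N ->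
  ((u%:R / K%:R <= v%:R / K%:R :> R) = (u <= v)%N).
Proof. by move=> K0; rewrite ler_pM2r ?invr_gt0 ?ltr0n // ler_nat. Qed.

Lemma expM_gt0 n : (0 < M ^ n)%N.
Proof. by rewrite expn_gt0 hM. Qed.

Lemma divM_eq (v n : nat) : (v%:R / M%:R : R) = (v * M ^ n)%:R / (M ^ n.+1)%:R.
Proof.
have h1 : (M%:R : R) != 0 by rewrite pnatr_eq0 -lt0n.
have h2 : ((M ^ n)%:R : R) != 0 by rewrite pnatr_eq0 -lt0n expM_gt0.
rewrite expnSr !natrM; field; rewrite h1 h2 //.
Qed.

Lemma L1 (u v n : nat) :
  (u%:R / (M ^ n.+1)%:R <= v%:R / M%:R :> R) = (u <= v * M ^ n)%N.
Proof. by rewrite (divM_eq v n) L_le_div // expM_gt0. Qed.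

Lemma L2 (u v n : nat) :
  (v%:R / M%:R <= u%:R / (M ^ n.+1)%:R :> R) = (v * M ^ n <= u)%N.
Proof. by rewrite (divM_eq v n) L_le_div // expM_gt0. Qed.

Lemma sub_nat (n i j a b : nat) :
  grid_square (R:=R) M n.+1 i j `<=` grid_square (R:=R) M 1 a b ->
  [/\ (a * M ^ n <= i)%N, (i.+1 <= a.+1 * M ^ n)%N,
      (b * M ^ n <= j)%N & (j.+1 <= b.+1 * M ^ n)%N].
Proof.
move=> H.
have K0 := expM_gt0 n.+1.
have le1 : forall u : nat, (u%:R / (M ^ n.+1)%:R <= u.+1%:R / (M ^ n.+1)%:R :> R).
  by move=> u; rewrite L_le_div.
have H1 := H (i%:R / (M ^ n.+1)%:R, j%:R / (M ^ n.+1)%:R).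
have H2 := H (i.+1%:R / (M ^ n.+1)%:R, j.+1%:R / (M ^ n.+1)%:R).
rewrite /grid_square /= !expn1 in H1 H2.
case: H1; first by rewrite !lexx !le1.
move=> /andP [h1 _] /andP [h3 _].
case: H2; first by rewrite !lexx !le1.
move=> /andP [_ h2] /andP [_ h4].
by rewrite -!L1 -!L2; split.
Qed.

Lemma nat_sub (n i j a b : nat) :
  (a * M ^ n <= i)%N -> (i.+1 <= a.+1 * M ^ n)%N ->
  (b * M ^ n <= j)%N -> (j.+1 <= b.+1 * M ^ n)%N ->
  grid_square (R:=R) M n.+1 i j `<=` grid_square (R:=R) M 1 a b.
Proof.
rewrite -!L1 -!L2 => h1 h2 h3 h4 z.
rewrite /grid_square /= !expn1 => -[/andP [z1 z2] /andP [z3 z4]].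
by split; apply/andP; split; [apply: le_trans h1 z1|apply: le_trans z2 h2|apply: le_trans h3 z3|apply: le_trans z4 h4].
Qed.

Definition cor (a : nat) (da : bool) (n : nat) : nat :=
  (if da then (a.+1 * M ^ n).-1 else a * M ^ n)%N.

Lemma cor_facts a (da : bool) n :
  [/\ (a * M ^ n <= cor a da n)%N, ((cor a da n).+1 <= a.+1 * M ^ n)%N,
      (cor a da n <= (a + da) * M ^ n)%N & ((a + da) * M ^ n <= (cor a da n).+1)%N].
Proof.
have K0 := expM_gt0 n; rewrite /cor mulSn.
case: da => /=; rewrite ?addn1 ?addn0 ?mulSn; split; lia.
Qed.

Lemma cor_uniq a (da : bool) n i :
  (a * M ^ n <= i)%N -> (i.+1 <= a.+1 * M ^ n)%N ->
  (i <= (a + da) * M ^ n)%N -> ((a + da) * M ^ n <= i.+1)%N -> i = cor a da n.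
Proof.
have K0 := expM_gt0 n; rewrite /cor mulSn.
case: da => /=; rewrite ?addn1 ?addn0 ?mulSn; lia.
Qed.

Lemma cor_div a (da : bool) n : (cor a da n %/ M ^ n)%N = a.
Proof.
have [h1 h2 _ _] := cor_facts a da n.
apply/eqP; rewrite eqn_leq leq_divRL ?expM_gt0 // h1 andbT -ltnS ltn_divLR ?expM_gt0 //.
Qed.

Arguments sub_nat {n i j a b}.
Arguments cor_uniq {a da n i}.

Lemma Cset_x (n : nat) (w : config M n.+1) (J : 'I_M * 'I_M) (da db : bool) (x : R * R) :
  x = ((J.1 + da)%:R / M%:R, (J.2 + db)%:R / M%:R) ->
  Cset (R:=R) w J x <-> ~ kept w (cor J.1 da n) (cor J.2 db n).
Proof.
move=> ->; split.
- move=> [i [j [iM jM sub nk sq]]].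
  have [h1 h2 h3 h4] := sub_nat sub.
  move: sq; rewrite /grid_square /= => -[/andP [s1 s2] /andP [s3 s4]].
  rewrite L1 in s1; rewrite L1 in s3; rewrite L2 in s2; rewrite L2 in s4.
  by rewrite -(cor_uniq h1 h2 s1 s2) -(cor_uniq h3 h4 s3 s4).
- move=> nk; exists (cor J.1 da n), (cor J.2 db n).
  have [h1 h2 h3 h4] := cor_facts J.1 da n.
  have [h1' h2' h3' h4'] := cor_facts J.2 db n.
  have aM := ltn_ord J.1; have bM := ltn_ord J.2.
  split => //.
  + apply: leq_trans h2 _; rewrite expnS leq_mul2r; apply/orP; right; exact: aM.
  + apply: leq_trans h2' _; rewrite expnS leq_mul2r; apply/orP; right; exact: bM.
  + exact: nat_sub.
  + by rewrite /grid_square /= !L1 !L2 h3 h4 h3' h4'.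
Qed.

Lemma cor_lt (a : 'I_M) (da : bool) n : (cor a da n < M ^ n.+1)%N.
Proof.
have [_ h2 _ _] := cor_facts a da n.
apply: leq_trans h2 _; rewrite expnS leq_mul2r; apply/orP; right; exact: ltn_ord.
Qed.

Lemma Cset_sub (n : nat) (w : config M n) (J : 'I_M * 'I_M) :
  Cset (R:=R) w J `<=` grid_square (R:=R) M 1 J.1 J.2.
Proof. by move=> z [i [j [_ _ sub _ sq]]]; apply: sub. Qed.

Definition Anc (n i j : nat) : {set coin_index M n} :=
  [set s : coin_index M n | ((tagged s).1 == (i %/ M ^ (n - (tag s).+1))%N :> nat)
                 && ((tagged s).2 == (j %/ M ^ (n - (tag s).+1))%N :> nat)]%SET.

Lemma kept_forall n (w : config M n) i j : kept w i j <-> [forall s in Anc n i j, w s].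
Proof.
split.
  by move=> H; apply/forall_inP => s; rewrite inE => /andP [/eqP h1 /eqP h2]; exact: H.
by move/forall_inP => H s h1 h2; apply: H; rewrite inE h1 h2 !eqxx.
Qed.

Lemma Anc_card n i j : (i < M ^ n.+1)%N -> (j < M ^ n.+1)%N -> #|Anc n.+1 i j| = n.+1.
Proof.
move=> iM jM.
have pf : forall u (t : 'I_n.+1), (u < M ^ n.+1)%N -> (u %/ M ^ (n.+1 - t.+1) < M ^ t.+1)%N.
  by move=> u t uM; rewrite ltn_divLR ?expM_gt0 // -expnD subnKC.
pose h (t : 'I_n.+1) : coin_index M n.+1 :=
  existT _ t (Ordinal (pf i t iM), Ordinal (pf j t jM)).
have -> : Anc n.+1 i j = [set h t | t : 'I_n.+1]%SET.
  apply/setP => s; rewrite inE; apply/idP/imsetP.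
  - case: s => t [u v] /= /andP [/eqP hu /eqP hv]; exists t => //.
    by rewrite /h; congr existT; congr pair; apply: val_inj.
  - by move=> [t _ ->]; rewrite /h /= !eqxx.
by rewrite card_imset ?cardsT ?card_ord // => t1 t2 /(congr1 tag).
Qed.

Lemma Anc_dis n a (da : bool) b (db : bool) a' (da' : bool) b' (db' : bool) s :
  s \in Anc n.+1 (cor a da n) (cor b db n) ->
  s \in Anc n.+1 (cor a' da' n) (cor b' db' n) -> a = a' /\ b = b'.
Proof.
rewrite !inE => /andP [/eqP h1 /eqP h2] /andP [/eqP h1' /eqP h2'].
have key : forall c, (c %/ M ^ n)%N = ((c %/ M ^ (n.+1 - (tag s).+1)) %/ M ^ (tag s))%N.
  move=> c; rewrite -divnMA -expnD subSS subnK //.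
  by have := ltn_ord (tag s); rewrite ltnS.
have Ha := cor_div a da n; rewrite key -h1 in Ha.
have Ha' := cor_div a' da' n; rewrite key -h1' in Ha'.
have Hb := cor_div b db n; rewrite key -h2 in Hb.
have Hb' := cor_div b' db' n; rewrite key -h2' in Hb'.
by rewrite -Ha -Ha' -Hb -Hb'.
Qed.
End Geo.
Lemma cvg_big (R : realType) k (f : 'I_k -> nat -> R) (l : 'I_k -> R) :
  (forall i, f i n @[n --> \oo] --> l i) ->
  (\sum_(i < k) f i n) @[n --> \oo] --> \sum_(i < k) l i.
Proof.
elim: k f l => [|k IH] f l H.
  have -> : (fun n => \sum_(i < 0) f i n) = (fun=> 0).
    by apply: funext => n; rewrite big_ord0.
  by rewrite big_ord0; exact: cvg_cst.
have -> : (fun n => \sum_(i < k.+1) f i n) =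
   (fun n => \sum_(i < k) f (widen_ord (leqnSn k) i) n + f ord_max n).
  by apply: funext => n; rewrite big_ord_recr.
rewrite big_ord_recr; apply: cvgD; last exact: H.
by apply: IH => i; exact: H.
Qed.

Lemma geo_lim (R : realType) (q : R) : `|q| < 1 ->
  (\sum_(1 <= n < N) q ^+ n) @[N --> \oo] --> q / (1 - q).
Proof.
move=> hq; rewrite -cvg_shiftS.
have := @cvg_geometric_series _ q q hq.
have -> : series (geometric q q) = (fun N => \sum_(1 <= n < N.+1) q ^+ n).
  apply: funext => N; rewrite /series /= big_add1 /=.
  by apply: eq_bigr => n _; rewrite exprS.
by [].
Qed.

Lemma series_lim (R : realType) (Q p : R) (m : nat) :
  (forall j, `|p ^+ j / Q| < 1) ->
  (\sum_(1 <= n < N) (Q^-1) ^+ n * (1 - p ^+ n) ^+ m) @[N --> \oo] -->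
  \sum_(j < m.+1) ((-1) ^+ j *+ 'C(m, j)) * ((p ^+ j / Q) / (1 - p ^+ j / Q)).
Proof.
move=> hq.
have -> : (fun N => \sum_(1 <= n < N) (Q^-1) ^+ n * (1 - p ^+ n) ^+ m) =
  (fun N => \sum_(j < m.+1) ((-1) ^+ j *+ 'C(m, j)) * \sum_(1 <= n < N) (p ^+ j / Q) ^+ n).
  apply: funext => N.
  under eq_bigr do rewrite (addrC 1) exprD1n big_distrr /=.
  rewrite exchange_big /=; apply: eq_bigr => j _; rewrite big_distrr /=.
  apply: eq_bigr => n _.
  rewrite mulrnAr mulrnAl; congr (_ *+ _).
  by rewrite (exprNn (p ^+ n) j) (exprMn _ (p ^+ j)) (exprAC p j n); ring.
apply: cvg_big => j; apply: cvgMl_tmp; exact: geo_lim.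
Qed.

Lemma rpow_eq (R : realType) (M : nat) (p : R) (n : nat) : (1 < M)%N ->
  0 < M%:R ^+ 2 * p ->
  (M%:R^-1 : R) `^ (n%:R * (ln (M%:R ^+ 2 * p) / ln M%:R)) = ((M%:R ^+ 2 * p)^-1) ^+ n.
Proof.
move=> M1 Q0; set Q := M%:R ^+ 2 * p.
have M0 : (0 : R) < M%:R by rewrite ltr0n; apply: leq_trans M1.
have lnM : 0 < ln (M%:R : R) by rewrite ln_gt0 // ltr1n.
rewrite mulrC powRrM powR_mulrn ?powR_ge0 //; congr (_ ^+ n).
rewrite /powR ifF; last by apply/negbTE; rewrite invr_eq0 gt_eqF.
rewrite lnV ?posrE //.
have -> : ln Q / ln M%:R * - ln M%:R = - ln Q by field; rewrite gt_eqF.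
by rewrite expRN lnK // posrE.
Qed.

Lemma prod_boolT (R : realType) (I : finType) (b : I -> bool) :
  \prod_i ((b i)%:R : R) = ([forall i, b i])%:R.
Proof.
case: forallP => [H|H].
  by rewrite big1 // => i _; rewrite H.
have [i nbi] : exists i, ~~ b i.
  by apply: contrapT => H2; apply: H => i; apply: contrapT => nbi; apply: H2; exists i; apply/negP.
by rewrite (bigD1 i) //= (negbTE nbi) mul0r.
Qed.

Lemma exp_term (R : realType) (M : nat) (p : R) (hM : (0 < M)%N)
  (J : 'I_4 -> 'I_M * 'I_M) (hJinj : injective J) (x : R * R) (da db : 'I_4 -> bool)
  (hx : forall k, x = (((J k).1 + da k)%:R / M%:R, ((J k).2 + db k)%:R / M%:R))
  (m : nat) (hm : (m <= 4)%N) (S : forall n, config M n -> set (R * R))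
  (hS1 : forall n w, S n w `<=` [set x])
  (hS2 : forall n w, S n.+1 w x <-> forall i : 'I_m, Cset (R:=R) w (J (widen_ord hm i)) x)
  (n : nat) :
  Exp p (fun w : config M n.+1 => V0 (S n.+1 w)) = (1 - p ^+ n.+1) ^+ m.
Proof.
rewrite /Exp.
pose e (i : 'I_m) := widen_ord hm i.
pose A (i : 'I_m) := Anc M n.+1 (cor M (J (e i)).1 (da (e i)) n) (cor M (J (e i)).2 (db (e i)) n).
rewrite -[in RHS](card_ord m) -(@exp_main R _ p _ A n.+1); first last.
- by move=> i; rewrite /A Anc_card ?cor_lt.
- move=> s i j si sj.
  have [h1 h2] := @Anc_dis M hM _ _ _ _ _ _ _ _ _ s si sj.
  have : J (e i) = J (e j).
    by case: (J (e i)) h1 h2 => a1 b1; case: (J (e j)) => a2 b2 /= h1 h2; congr pair; apply: val_inj.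
  by move/hJinj/(congr1 val) => /= h; apply: val_inj.
apply: eq_bigr => w _; congr (_ * _).
rewrite (@V0_sub1 R x _ (hS1 _ w)).
have E : forall i, (1 - \prod_(s in A i) ((w s)%:R : R)) = (~~ [forall s in A i, w s])%:R.
  move=> i; rewrite prod_bool; case: forall_inP => _ /=; [exact: subrr | exact: subr0].
rewrite (eq_bigr _ (fun i _ => E i)) prod_boolT.
congr ((nat_of_bool _)%:R); apply/asboolP/forallP.
- move=> /hS2 H i; apply/negP => /kept_forall; apply/(@Cset_x R M hM _ _ _ _ _ _ (hx (e i))).
  exact: H.
- move=> H; apply/hS2 => i; apply/(@Cset_x R M hM _ _ _ _ _ _ (hx (e i))) => /kept_forall.
  by apply/negP; apply: H.
Qed.

Lemma case_gen (R : realType) (M : nat) (p : R) (hM : (1 < M)%N)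
  (hp0 : 0 < p) (hp2 : p <= 1) (hQ : 1 < M%:R ^+ 2 * p)
  (J : 'I_4 -> 'I_M * 'I_M) (hJinj : injective J) (x : R * R) (da db : 'I_4 -> bool)
  (hx : forall k, x = (((J k).1 + da k)%:R / M%:R, ((J k).2 + db k)%:R / M%:R))
  (m : nat) (hm : (m <= 4)%N) (S : forall n, config M n -> set (R * R))
  (hS1 : forall n w, S n w `<=` [set x])
  (hS2 : forall n w, S n.+1 w x <-> forall i : 'I_m, Cset (R:=R) w (J (widen_ord hm i)) x)
  (c : R) :
  (fun N : nat => c * \sum_(1 <= n < N)
      (M%:R^-1 : R) `^ (n%:R * (ln (M%:R ^+ 2 * p) / ln M%:R)) *
      Exp p (fun w : config M n => V0 (S n w)))
   @ \oo --> c * \sum_(j < m.+1) ((-1) ^+ j *+ 'C(m, j)) *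
               ((p ^+ j / (M%:R ^+ 2 * p)) / (1 - p ^+ j / (M%:R ^+ 2 * p))).
Proof.
have hM0 : (0 < M)%N by apply: leq_trans hM.
set Q := M%:R ^+ 2 * p.
have Q0 : 0 < Q by apply: lt_trans hQ.
have hq : forall j, `|p ^+ j / Q| < 1.
  move=> j; rewrite ger0_norm ?divr_ge0 ?exprn_ge0 ?ltW //.
  rewrite ltr_pdivrMr // mul1r; apply: le_lt_trans hQ.
  by apply: exprn_ile1 => //; apply: ltW.
have E : (fun N : nat => c * \sum_(1 <= n < N)
      (M%:R^-1 : R) `^ (n%:R * (ln Q / ln M%:R)) *
      Exp p (fun w : config M n => V0 (S n w))) =
   (fun N => c * \sum_(1 <= n < N) (Q^-1) ^+ n * (1 - p ^+ n) ^+ m).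
  apply: funext => N; congr (_ * _); apply: eq_big_nat => n /andP [n1 _].
  case: n n1 => // n _.
  rewrite rpow_eq ?ltW //.
  by rewrite (@exp_term R M p hM0 J hJinj x da db hx m hm S hS1 hS2).
rewrite E; apply: cvgMl_tmp; exact: series_lim.
Qed.

Lemma frac_eq (R : realType) (u Q : R) : Q != 0 -> Q - u != 0 ->
  (u / Q) / (1 - u / Q) = u / (Q - u).
Proof. by move=> h1 h2; field; rewrite h1 h2. Qed.

Lemma val2 (R : realType) (M : nat) (p : R) (hM : (1 < M)%N)
  (hp0 : 0 < p) (hp2 : p <= 1) (hQ : 1 < M%:R ^+ 2 * p) :
  \sum_(j < 3) ((-1) ^+ j *+ 'C(2, j)) *
     ((p ^+ j / (M%:R ^+ 2 * p)) / (1 - p ^+ j / (M%:R ^+ 2 * p))) =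
  (M%:R ^+ 2 * p - 1)^-1 - 2 / (M%:R ^+ 2 - 1) + p / (M%:R ^+ 2 - p).
Proof.
have M1 : (1 : R) < M%:R by rewrite ltr1n.
have M2 : (1 : R) < M%:R ^+ 2 by rewrite expr2; nra.
have hpk : forall k, p ^+ k <= 1 by move=> k; apply: exprn_ile1 => //; apply: ltW.
have hQk : forall k, M%:R ^+ 2 * p - p ^+ k != 0.
  by move=> k; rewrite subr_eq0 gt_eqF // (le_lt_trans (hpk k)).
have hMk : forall k, M%:R ^+ 2 - p ^+ k != 0.
  by move=> k; rewrite subr_eq0 gt_eqF // (le_lt_trans (hpk k)).
have Q0 : M%:R ^+ 2 * p != 0 by rewrite gt_eqF // (lt_trans _ hQ).
rewrite !big_ord_recr big_ord0 /= !frac_eq //.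
rewrite (_ : 'C(2, 1) = 2) // !binn bin0.
have key : forall A B : R, B <= 1 -> 1 < A -> A - B != 0.
  by move=> A B hB hA; rewrite subr_eq0 gt_eqF // (le_lt_trans hB).
by field; rewrite !key ?hpk ?M2 ?hQ ?hp2 ?lexx.
Qed.

Lemma val3 (R : realType) (M : nat) (p : R) (hM : (1 < M)%N)
  (hp0 : 0 < p) (hp2 : p <= 1) (hQ : 1 < M%:R ^+ 2 * p) :
  \sum_(j < 4) ((-1) ^+ j *+ 'C(3, j)) *
     ((p ^+ j / (M%:R ^+ 2 * p)) / (1 - p ^+ j / (M%:R ^+ 2 * p))) =
  (M%:R ^+ 2 * p - 1)^-1 - 3 / (M%:R ^+ 2 - 1) + 3 * p / (M%:R ^+ 2 - p)
           - p ^+ 2 / (M%:R ^+ 2 - p ^+ 2).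
Proof.
have M1 : (1 : R) < M%:R by rewrite ltr1n.
have M2 : (1 : R) < M%:R ^+ 2 by rewrite expr2; nra.
have hpk : forall k, p ^+ k <= 1 by move=> k; apply: exprn_ile1 => //; apply: ltW.
have hQk : forall k, M%:R ^+ 2 * p - p ^+ k != 0.
  by move=> k; rewrite subr_eq0 gt_eqF // (le_lt_trans (hpk k)).
have hMk : forall k, M%:R ^+ 2 - p ^+ k != 0.
  by move=> k; rewrite subr_eq0 gt_eqF // (le_lt_trans (hpk k)).
have Q0 : M%:R ^+ 2 * p != 0 by rewrite gt_eqF // (lt_trans _ hQ).
rewrite !big_ord_recr big_ord0 /= !frac_eq //.
rewrite (_ : 'C(3, 1) = 3) // (_ : 'C(3, 2) = 3) // !binn bin0.
have key : forall A B : R, B <= 1 -> 1 < A -> A - B != 0.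
  by move=> A B hB hA; rewrite subr_eq0 gt_eqF // (le_lt_trans hB).
by field; rewrite !key ?hpk ?M2 ?hQ ?hp2 ?lexx.
Qed.

Lemma val4 (R : realType) (M : nat) (p : R) (hM : (1 < M)%N)
  (hp0 : 0 < p) (hp2 : p <= 1) (hQ : 1 < M%:R ^+ 2 * p) :
  \sum_(j < 5) ((-1) ^+ j *+ 'C(4, j)) *
     ((p ^+ j / (M%:R ^+ 2 * p)) / (1 - p ^+ j / (M%:R ^+ 2 * p))) =
  (M%:R ^+ 2 * p - 1)^-1 - 4 / (M%:R ^+ 2 - 1) + 6 * p / (M%:R ^+ 2 - p)
           - 4 * p ^+ 2 / (M%:R ^+ 2 - p ^+ 2) + p ^+ 3 / (M%:R ^+ 2 - p ^+ 3).
Proof.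
have M1 : (1 : R) < M%:R by rewrite ltr1n.
have M2 : (1 : R) < M%:R ^+ 2 by rewrite expr2; nra.
have hpk : forall k, p ^+ k <= 1 by move=> k; apply: exprn_ile1 => //; apply: ltW.
have hQk : forall k, M%:R ^+ 2 * p - p ^+ k != 0.
  by move=> k; rewrite subr_eq0 gt_eqF // (le_lt_trans (hpk k)).
have hMk : forall k, M%:R ^+ 2 - p ^+ k != 0.
  by move=> k; rewrite subr_eq0 gt_eqF // (le_lt_trans (hpk k)).
have Q0 : M%:R ^+ 2 * p != 0 by rewrite gt_eqF // (lt_trans _ hQ).
rewrite !big_ord_recr big_ord0 /= !frac_eq //.
rewrite (_ : 'C(4, 1) = 4) // (_ : 'C(4, 2) = 6) // (_ : 'C(4, 3) = 4) // !binn bin0.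
have key : forall A B : R, B <= 1 -> 1 < A -> A - B != 0.
  by move=> A B hB hA; rewrite subr_eq0 gt_eqF // (le_lt_trans hB).
by field; rewrite !key ?hpk ?M2 ?hQ ?hp2 ?lexx.
Qed.

Lemma widen_val (m : nat) (hm : (m <= 4)%N) (i : 'I_m) (k : 'I_4) :
  val i = val k -> widen_ord hm i = k.
Proof. by move=> h; apply: val_inj. Qed.

Theorem lemma5p10 (R : realType) (M : nat) (p : R)
  (hM : (2 <= M)%N) (hp1 : 1 / (M%:R ^+ 2) < p) (hp2 : p <= 1)
  (x : R * R) (J : 'I_4 -> 'I_M * 'I_M)
  (hJinj : injective J)
  (hcorner : forall k, is_corner1 M x (J k).1 (J k).2)
  (h12 : grid_square (R:=R) M 1 (J 0).1 (J 0).2 `&` grid_square (R:=R) M 1 (J 1).1 (J 1).2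
         = [set x]) :
  let D := ln (M%:R ^+ 2 * p) / ln M%:R in
  let r := M%:R^-1 : R in
  let C := fun n (w : config M n) (k : 'I_4) => Cset (R:=R) w (J k) in
  [/\ (fun N : nat => 2 * (M%:R - 1) ^+ 2 * \sum_(1 <= n < N)
          r `^ (n%:R * D) * Exp p (fun w => V0 (C n w 0 `&` C n w 1)))
        @ \oo --> 2 * (M%:R - 1) ^+ 2 *
          ((M%:R ^+ 2 * p - 1)^-1 - 2 / (M%:R ^+ 2 - 1) + p / (M%:R ^+ 2 - p)),
      (fun N : nat => 4 * (M%:R - 1) ^+ 2 * \sum_(1 <= n < N)
          r `^ (n%:R * D) * Exp p (fun w => V0 (C n w 0 `&` C n w 1 `&` C n w 2)))
        @ \oo --> 4 * (M%:R - 1) ^+ 2 *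
          ((M%:R ^+ 2 * p - 1)^-1 - 3 / (M%:R ^+ 2 - 1) + 3 * p / (M%:R ^+ 2 - p)
           - p ^+ 2 / (M%:R ^+ 2 - p ^+ 2)) &
      (fun N : nat => (M%:R - 1) ^+ 2 * \sum_(1 <= n < N)
          r `^ (n%:R * D) *
          Exp p (fun w => V0 (C n w 0 `&` C n w 1 `&` C n w 2 `&` C n w 3)))
        @ \oo --> (M%:R - 1) ^+ 2 *
          ((M%:R ^+ 2 * p - 1)^-1 - 4 / (M%:R ^+ 2 - 1) + 6 * p / (M%:R ^+ 2 - p)
           - 4 * p ^+ 2 / (M%:R ^+ 2 - p ^+ 2) + p ^+ 3 / (M%:R ^+ 2 - p ^+ 3))].
Proof.
move=> D r C.
have hM1 : (1 < M)%N by [].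
have hM0 : (0 < M)%N by apply: leq_trans hM.
have M2 : (0 : R) < M%:R ^+ 2 by rewrite exprn_gt0 // ltr0n.
have hQ : 1 < M%:R ^+ 2 * p by rewrite mulrC -ltr_pdivrMr.
have hp0 : 0 < p by apply: lt_trans hp1; rewrite divr_gt0.
have : forall k, exists d : bool * bool,
    x = (((J k).1 + d.1)%:R / M%:R, ((J k).2 + d.2)%:R / M%:R).
  by move=> k; have [da [db h]] := hcorner k; exists (da, db).
case/choice => d hd.
have hx : forall k, x = (((J k).1 + (fun k => (d k).1) k)%:R / M%:R,
                         ((J k).2 + (fun k => (d k).2) k)%:R / M%:R) by [].
have sub01 : forall n (w : config M n) (T : set (R * R)),
    T `<=` C n w 0 `&` C n w 1 -> T `<=` [set x].
  move=> n w T HT z Tz; have [h0 h1] := HT z Tz; rewrite -h12; split.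
    by move: h0; apply: Cset_sub.
  by move: h1; apply: Cset_sub.
split.
- rewrite -(@val2 R M p hM1 hp0 hp2 hQ).
  apply: (@case_gen R M p hM1 hp0 hp2 hQ J hJinj x _ _ hx 2 isT
           (fun n w => C n w 0 `&` C n w 1)).
  + by move=> n w; apply: (sub01 n w) => z.
  + move=> n w; split.
      move=> [h0 h1] [[|[|k]] Hk] //.
        by rewrite (@widen_val 2 isT _ 0).
      by rewrite (@widen_val 2 isT _ 1).
    move=> H; split.
      by have := H (Ordinal (isT : (0 < 2)%N)); rewrite (@widen_val 2 isT _ 0).
    by have := H (Ordinal (isT : (1 < 2)%N)); rewrite (@widen_val 2 isT _ 1).
- rewrite -(@val3 R M p hM1 hp0 hp2 hQ).
  apply: (@case_gen R M p hM1 hp0 hp2 hQ J hJinj x _ _ hx 3 isT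
           (fun n w => C n w 0 `&` C n w 1 `&` C n w 2)).
  + by move=> n w; apply: (sub01 n w) => z [].
  + move=> n w; split.
      move=> [[h0 h1] h2] [[|[|[|k]]] Hk] //.
      * by rewrite (@widen_val 3 isT _ 0).
      * by rewrite (@widen_val 3 isT _ 1).
      * by rewrite (@widen_val 3 isT _ 2).
    move=> H; split; first split.
    * by have := H (Ordinal (isT : (0 < 3)%N)); rewrite (@widen_val 3 isT _ 0).
    * by have := H (Ordinal (isT : (1 < 3)%N)); rewrite (@widen_val 3 isT _ 1).
    * by have := H (Ordinal (isT : (2 < 3)%N)); rewrite (@widen_val 3 isT _ 2).
- rewrite -(@val4 R M p hM1 hp0 hp2 hQ).
  apply: (@case_gen R M p hM1 hp0 hp2 hQ J hJinj x _ _ hx 4 isT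
           (fun n w => C n w 0 `&` C n w 1 `&` C n w 2 `&` C n w 3)).
  + by move=> n w; apply: (sub01 n w) => z [[]].
  + move=> n w; split.
      move=> [[[h0 h1] h2] h3] [[|[|[|[|k]]]] Hk] //.
      * by rewrite (@widen_val 4 isT _ 0).
      * by rewrite (@widen_val 4 isT _ 1).
      * by rewrite (@widen_val 4 isT _ 2).
      * by rewrite (@widen_val 4 isT _ 3).
    move=> H; split; first split; first split.
    * by have := H (Ordinal (isT : (0 < 4)%N)); rewrite (@widen_val 4 isT _ 0).
    * by have := H (Ordinal (isT : (1 < 4)%N)); rewrite (@widen_val 4 isT _ 1).
    * by have := H (Ordinal (isT : (2 < 4)%N)); rewrite (@widen_val 4 isT _ 2).
    * by have := H (Ordinal (isT : (3 < 4)%N)); rewrite (@widen_val 4 isT _ 3).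
Qed.
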